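(* For every $n\ge1$ and all two-sided ideals $I,J$ of $\mathbb{S}_n$, we have $IJ=JI$.
   Context: $K$ is a field. $\mathbb{S}_n$ is the $K$-algebra generated by $x_1,\dots,x_n,y_1,\dots,y_n$ subject to the defining relations $y_ix_i=1$ for all $i$, and $[x_i,y_j]=[x_i,x_j]=[y_i,y_j]=0$ for all $i\ne j$, where $[a,b]=ab-ba$. *)

(* Defs.v *)
From HB Require Import structures.
From mathcomp Require Import all_boot all_order all_algebra.
Set Implicit Arguments. Unset Strict Implicit. Unset Printing Implicit Defensive.
Import GRing.Theory.
Local Open Scope ring_scope.

Definition Sn_rels (K : fieldType) (B : algType K) (n : nat)
    (x y : 'I_n -> B) : Prop :=
  (forall i, y i * x i = 1) /\
  (forall i j : 'I_n, i != j ->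
     [/\ x i * y j = y j * x i, x i * x j = x j * x i & y i * y j = y j * y i]).

(* (A, x, y) is the K-algebra presented by generators x_i, y_i and the
   relations above, i.e. it satisfies the universal property of S_n. *)
Definition is_Sn (K : fieldType) (n : nat) (A : algType K)
    (x y : 'I_n -> A) : Prop :=
  Sn_rels x y /\
  forall (B : algType K) (u v : 'I_n -> B), Sn_rels u v ->
    (exists f : {lrmorphism A -> B}, forall i, f (x i) = u i /\ f (y i) = v i) /\
    (forall f g : {lrmorphism A -> B},
        (forall i, f (x i) = u i /\ f (y i) = v i) ->
        (forall i, g (x i) = u i /\ g (y i) = v i) -> f =1 g).

Definition two_sided_ideal (A : nzRingType) (I : A -> Prop) : Prop :=
  I 0 /\ (forall a b, I a -> I b -> I (a + b)) /\
  (forall r a, I a -> I (r * a) /\ I (a * r)).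

Definition ideal_mul (A : nzRingType) (I J : A -> Prop) : A -> Prop :=
  fun c => exists s : seq (A * A),
    (forall p, p \in s -> I p.1 /\ J p.2) /\ c = \sum_(p <- s) p.1 * p.2.

(* Main.v *)
Require Import Defs.
From HB Require Import structures.
From mathcomp Require Import all_boot all_order all_algebra.
From Stdlib Require Import ClassicalEpsilon.
Set Implicit Arguments. Unset Strict Implicit. Unset Printing Implicit Defensive.
Import GRing.Theory.
Local Open Scope ring_scope.

Section Basics.
Variables (K : fieldType) (n : nat) (A : algType K) (x y : 'I_n -> A).
Hypothesis yx : forall i, y i * x i = 1.
Hypothesis cm : forall i j, i != j ->
  [/\ x i * y j = y j * x i, x i * x j = x j * x i & y i * y j = y j * y i].

Local Notation comm := GRing.comm.
Implicit Types (S T : {set 'I_n}) (i j : 'I_n).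

Lemma cxx i j : comm (x i) (x j).
Proof. by case: (eqVneq i j) => [->|/cm[]] //. Qed.
Lemma cyy i j : comm (y i) (y j).
Proof. by case: (eqVneq i j) => [->|/cm[]] //. Qed.
Lemma cxy i j : i != j -> comm (x i) (y j).
Proof. by case/cm. Qed.
Lemma cyx i j : i != j -> comm (y i) (x j).
Proof. by rewrite eq_sym => /cm[h _ _]; rewrite /comm h. Qed.

Definition p i := 1 - x i * y i.

Lemma pp i : p i * p i = p i.
Proof.
rewrite /p mulrBl mul1r mulrBr mulr1 !mulrA -(mulrA (x i)) yx mulr1.
by rewrite subrr subr0.
Qed.
Lemma px i : p i * x i = 0.
Proof. by rewrite /p mulrBl mul1r -mulrA yx mulr1 subrr. Qed.
Lemma yp i : y i * p i = 0.
Proof. by rewrite /p mulrBr mulr1 mulrA yx mul1r subrr. Qed.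
Lemma cpx i j : i != j -> comm (p i) (x j).
Proof.
move=> ij; apply/commr_sym; apply: commrB; first exact: commr1.
by apply: commrM; [exact: cxx | apply: cxy; rewrite eq_sym].
Qed.
Lemma cpy i j : i != j -> comm (p i) (y j).
Proof.
move=> ij; apply/commr_sym; apply: commrB; first exact: commr1.
by apply: commrM; [apply: cyx; rewrite eq_sym | exact: cyy].
Qed.
Lemma cpp i j : comm (p i) (p j).
Proof.
case: (eqVneq i j) => [->//|ij].
apply: commrB; first exact: commr1.
by apply: commrM; [apply: cpx | apply: cpy].
Qed.

Lemma prod_mul_comm (s : seq 'I_n) (F G : 'I_n -> A) :
  (forall i k, comm (G i) (F k)) ->
  \prod_(i <- s) (G i * F i) = \prod_(i <- s) G i * \prod_(i <- s) F i.
Proof.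
move=> hc; elim: s => [|a s IH]; first by rewrite !big_nil mulr1.
rewrite !big_cons IH !mulrA; congr (_ * _); rewrite -!mulrA; congr (_ * _).
apply: commr_prod => i _; exact/commr_sym.
Qed.

Lemma prod_at (j : 'I_n) (c : A) :
  \prod_(i < n) (if i == j then c else 1) = c.
Proof. by rewrite -big_mkcond big_pred1_eq. Qed.

Lemma prod_act_l (s : seq 'I_n) (F : 'I_n -> A) z :
  (forall i, F i * z = z) -> \prod_(i <- s) F i * z = z.
Proof.
move=> h; elim: s => [|a s IH]; first by rewrite big_nil mul1r.
by rewrite big_cons -mulrA IH h.
Qed.
Lemma prod_act_r (s : seq 'I_n) (F : 'I_n -> A) z :
  (forall i, z * F i = z) -> z * \prod_(i <- s) F i = z.
Proof.
move=> h; elim: s => [|a s IH]; first by rewrite big_nil mulr1.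
by rewrite big_cons mulrA h IH.
Qed.

Definition upd (g : 'I_n -> nat) i k := fun j => if j == i then k else g j.
Definition X (g : 'I_n -> nat) := \prod_(i < n) x i ^+ g i.
Definition Y (g : 'I_n -> nat) := \prod_(i < n) y i ^+ g i.
Definition pS (S : {set 'I_n}) := \prod_(i < n) (if i \in S then p i else 1).
Definition supp (g : 'I_n -> nat) (S : {set 'I_n}) := forall i, i \notin S -> g i = 0%N.

Lemma X_ext i g : X g = x i ^+ g i * X (upd g i 0).
Proof.
rewrite /X -[in x i ^+ g i](prod_at i (x i ^+ g i)) -prod_mul_comm.
  apply: eq_bigr => k _; rewrite /upd; case: eqP => [->|_]; by rewrite ?expr0 ?mulr1 ?mul1r.
move=> k l; case: eqP => _; last exact/commr_sym/commr1.
apply/commr_sym/commrX/commr_sym/commrX; exact: cxx.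
Qed.
Lemma Y_ext i g : Y g = Y (upd g i 0) * y i ^+ g i.
Proof.
rewrite /Y -[in y i ^+ g i](prod_at i (y i ^+ g i)) -prod_mul_comm.
  apply: eq_bigr => k _; rewrite /upd; case: eqP => [->|_]; by rewrite ?expr0 ?mulr1 ?mul1r.
move=> k l; case: eqP => _; last exact: commr1.
apply: commrX; apply: commr_sym; apply: commrX; exact: cyy.
Qed.

Lemma X_eq g h : (forall k, g k = h k) -> X g = X h.
Proof. by move=> e; apply: eq_bigr => k _; rewrite e. Qed.
Lemma Y_eq g h : (forall k, g k = h k) -> Y g = Y h.
Proof. by move=> e; apply: eq_bigr => k _; rewrite e. Qed.
Lemma X0 : X (fun _ => 0%N) = 1.
Proof. by rewrite /X big1 // => k _; rewrite expr0. Qed.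
Lemma Y0 : Y (fun _ => 0%N) = 1.
Proof. by rewrite /Y big1 // => k _; rewrite expr0. Qed.

Lemma cxX i h : comm (x i) (X h).
Proof. by apply: commr_prod => k _; apply: commrX; apply: cxx. Qed.
Lemma cyY i h : comm (y i) (Y h).
Proof. by apply: commr_prod => k _; apply: commrX; apply: cyy. Qed.
Lemma cyX i h : h i = 0%N -> comm (y i) (X h).
Proof.
move=> h0; apply: commr_prod => k _; case: (eqVneq k i) => [->|ki].
  by rewrite h0 expr0; exact: commr1.
by apply: commrX; apply: cyx; rewrite eq_sym.
Qed.
Lemma cxY i h : h i = 0%N -> comm (x i) (Y h).
Proof.
move=> h0; apply: commr_prod => k _; case: (eqVneq k i) => [->|ki].
  by rewrite h0 expr0; exact: commr1.
by apply: commrX; apply: cxy; rewrite eq_sym.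
Qed.
Lemma cpX i h : h i = 0%N -> comm (p i) (X h).
Proof.
move=> h0; apply: commr_prod => k _; case: (eqVneq k i) => [->|ki].
  by rewrite h0 expr0; exact: commr1.
by apply: commrX; apply: cpx; rewrite eq_sym.
Qed.
Lemma cpY i h : h i = 0%N -> comm (p i) (Y h).
Proof.
move=> h0; apply: commr_prod => k _; case: (eqVneq k i) => [->|ki].
  by rewrite h0 expr0; exact: commr1.
by apply: commrX; apply: cpy; rewrite eq_sym.
Qed.

Lemma xX i g : x i * X g = X (upd g i (g i).+1).
Proof.
rewrite (X_ext i g) (X_ext i (upd g i (g i).+1)) mulrA -exprS /upd eqxx.
by congr (_ * _); apply: X_eq => k; case: eqP.
Qed.
Lemma Yy i g : Y g * y i = Y (upd g i (g i).+1).
Proof.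
rewrite (Y_ext i g) (Y_ext i (upd g i (g i).+1)) -mulrA -exprSr /upd eqxx.
by congr (_ * _); apply: Y_eq => k; case: eqP.
Qed.

Lemma pS_add (j : 'I_n) (T : {set 'I_n}) : j \notin T -> pS (j |: T) = p j * pS T.
Proof.
move=> jT; rewrite /pS -[in p j * _](prod_at j (p j)) -prod_mul_comm.
  apply: eq_bigr => k _; rewrite in_setU1; case: (eqVneq k j) => [->|_] /=.
    by rewrite (negbTE jT) mulr1.
  by rewrite mul1r.
move=> k l; case: eqP => _; last exact/commr_sym/commr1.
case: (l \in T); [exact: cpp | exact: commr1].
Qed.
Lemma pS_ext (j : 'I_n) (S : {set 'I_n}) : j \in S -> pS S = p j * pS (S :\ j).
Proof. by move=> jS; rewrite -pS_add ?setD1K // !inE eqxx. Qed.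
Lemma pS0 : pS set0 = 1.
Proof. by rewrite /pS big1 // => k _; rewrite inE. Qed.
Lemma pSpS (S : {set 'I_n}) : pS S * pS S = pS S.
Proof.
rewrite /pS -prod_mul_comm; last first.
  move=> k l; case: (k \in S); case: (l \in S); try exact: cpp;
  try exact: commr1; exact/commr_sym/commr1.
by apply: eq_bigr => k _; case: (k \in S); rewrite ?pp ?mulr1.
Qed.
Lemma cpS (S : {set 'I_n}) z : (forall i, i \in S -> comm (p i) z) -> comm (pS S) z.
Proof.
move=> h; apply/commr_sym; apply: commr_prod => k _; case: ifP => kS.
  exact/commr_sym/h.
exact: commr1.
Qed.
Lemma cpS_p (S : {set 'I_n}) (i : 'I_n) : comm (pS S) (p i).
Proof. by apply: cpS => k _; apply: cpp. Qed.
Lemma cpS_x (S : {set 'I_n}) (i : 'I_n) : i \notin S -> comm (pS S) (x i).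
Proof. by move=> iS; apply: cpS => k kS; apply: cpx; apply: contraNneq iS => <-. Qed.
Lemma cpS_y (S : {set 'I_n}) (i : 'I_n) : i \notin S -> comm (pS S) (y i).
Proof. by move=> iS; apply: cpS => k kS; apply: cpy; apply: contraNneq iS => <-. Qed.
Lemma pSx (S : {set 'I_n}) (i : 'I_n) : i \in S -> pS S * x i = 0.
Proof.
move=> iS; rewrite (pS_ext iS) -(cpS_p (S :\ i) i) -mulrA px mulr0.
by [].
Qed.
Lemma ypS (S : {set 'I_n}) (i : 'I_n) : i \in S -> y i * pS S = 0.
Proof. by move=> iS; rewrite (pS_ext iS) mulrA yp mul0r. Qed.

Lemma yXp (S : {set 'I_n}) (i : 'I_n) g : i \in S ->
  y i * (X g * pS S) = if g i is k.+1 then X (upd g i k) * pS S else 0.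
Proof.
move=> iS; rewrite (X_ext i g); case E: (g i) => [|k].
  rewrite expr0 mul1r mulrA (cyX (h := upd g i 0) (i := i)); last by rewrite /upd eqxx.
  by rewrite -mulrA ypS // mulr0.
rewrite mulrA mulrA exprS mulrA yx mul1r (X_ext i (upd g i k)) /upd eqxx.
by congr (_ * _ * _); apply: X_eq => l; case: eqP.
Qed.
Lemma pYx (S : {set 'I_n}) (i : 'I_n) h : i \in S ->
  (pS S * Y h) * x i = if h i is k.+1 then pS S * Y (upd h i k) else 0.
Proof.
move=> iS; rewrite (Y_ext i h); case E: (h i) => [|k].
  rewrite expr0 mulr1 -mulrA -(cxY (h := upd h i 0) (i := i)); last by rewrite /upd eqxx.
  by rewrite mulrA pSx // mul0r.
rewrite -!mulrA exprSr -mulrA yx mulr1 (Y_ext i (upd h i k)) /upd eqxx.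
by congr (_ * (_ * _)); apply: Y_eq => l; case: eqP.
Qed.

Lemma yXp_big (S : {set 'I_n}) (i : 'I_n) g k : i \in S -> (g i < k)%N -> y i ^+ k * (X g * pS S) = 0.
Proof.
move=> iS; elim: k g => [|k IH] g //= lt.
rewrite exprSr -mulrA yXp //; case E: (g i) => [|m]; first by rewrite mulr0.
by apply: IH; rewrite /upd eqxx; rewrite E ltnS in lt.
Qed.
Lemma pYx_big (S : {set 'I_n}) (i : 'I_n) h k : i \in S -> (h i < k)%N -> (pS S * Y h) * x i ^+ k = 0.
Proof.
move=> iS; elim: k h => [|k IH] h //= lt.
rewrite exprS mulrA pYx //; case E: (h i) => [|m]; first by rewrite mul0r.
by apply: IH; rewrite /upd eqxx; rewrite E ltnS in lt.
Qed.

Definition PB (S : {set 'I_n}) (B : nat) :=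
  \prod_(i < n) (if i \in S then 1 - x i ^+ B * y i ^+ B else 1).

Lemma PB_l (S : {set 'I_n}) B g : (forall i, g i < B)%N -> PB S B * (X g * pS S) = X g * pS S.
Proof.
move=> lt; apply: prod_act_l => i; case: ifP => iS; last by rewrite mul1r.
by rewrite mulrBl mul1r -mulrA yXp_big // mulr0 subr0.
Qed.
Lemma PB_r (S : {set 'I_n}) B h : (forall i, h i < B)%N -> (pS S * Y h) * PB S B = pS S * Y h.
Proof.
move=> lt; apply: prod_act_r => i; case: ifP => iS; last by rewrite mulr1.
by rewrite mulrBr mulr1 mulrA pYx_big // mul0r subr0.
Qed.


Inductive Gen (U : {set 'I_n}) : A -> Prop :=
| G1 : Gen U 1
| Gx i : i \in U -> Gen U (x i)
| Gy i : i \in U -> Gen U (y i)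
| GD a b : Gen U a -> Gen U b -> Gen U (a + b)
| GM a b : Gen U a -> Gen U b -> Gen U (a * b)
| GZ (c : K) a : Gen U a -> Gen U (c *: a).

Lemma Gen0 U : Gen U 0.
Proof. by rewrite -(scale0r (1 : A)); apply: GZ; apply: G1. Qed.

Lemma Gen_cpS (S : {set 'I_n}) c : Gen (~: S) c -> comm (pS S) c.
Proof.
elim=> {c} [|i|i|a b _ ha _ hb|a b _ ha _ hb|k a _ ha].
- exact: commr1.
- by rewrite inE => iS; apply: cpS_x.
- by rewrite inE => iS; apply: cpS_y.
- exact: commrD.
- exact: commrM.
- by rewrite /comm -scalerAr ha scalerAl.
Qed.

Inductive LSpan (S : {set 'I_n}) : A -> Prop :=
| LS0 : LSpan S 0
| LSt g c : supp g S -> Gen (~: S) c -> LSpan S (X g * pS S * c)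
| LSD a b : LSpan S a -> LSpan S b -> LSpan S (a + b).

Inductive RSpan (S : {set 'I_n}) : A -> Prop :=
| RS0 : RSpan S 0
| RSt d h : supp h S -> RSpan S (d * pS S * Y h)
| RSD a b : RSpan S a -> RSpan S b -> RSpan S (a + b).

Inductive DSpan (S : {set 'I_n}) : A -> Prop :=
| DS0 : DSpan S 0
| DSt e : supp e S -> DSpan S (X e * pS S * Y e)
| DSD a b : DSpan S a -> DSpan S b -> DSpan S (a + b).

Lemma supp_upd g (S : {set 'I_n}) i k : supp g S -> i \in S -> supp (upd g i k) S.
Proof. by move=> sg iS j jS; rewrite /upd; case: eqP => [e|_]; [rewrite e iS in jS | apply: sg]. Qed.

Lemma LS_Z S (c : K) z : LSpan S z -> LSpan S (c *: z).
Proof.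
elim=> {z} [|g d sg gd|a b _ ha _ hb]; first by rewrite scaler0; apply: LS0.
  by rewrite scalerAr; apply: LSt => //; apply: GZ.
by rewrite scalerDr; apply: LSD.
Qed.

Lemma LS_gen S a z : Gen setT a -> LSpan S z -> LSpan S (a * z).
Proof.
move=> ga; elim: ga z => {a} [|i _|i _|a b _ ha _ hb|a b _ ha _ hb|k a _ ha] z hz.
- by rewrite mul1r.
- elim: hz => {z} [|g c sg gc|a b _ ha _ hb]; first by rewrite mulr0; apply: LS0.
    case: (boolP (i \in S)) => iS.
      by rewrite !mulrA xX; apply: LSt => //; apply: supp_upd.
    rewrite !mulrA (cxX i g) -!mulrA (mulrA (x i)) -(cpS_x iS) -!mulrA.
    rewrite mulrA; apply: LSt => //; apply: GM => //; by apply: Gx; rewrite inE.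
  by rewrite mulrDr; apply: LSD.
- elim: hz => {z} [|g c sg gc|a b _ ha _ hb]; first by rewrite mulr0; apply: LS0.
    case: (boolP (i \in S)) => iS.
      rewrite mulrA yXp //; case: (g i) => [|m]; first by rewrite mul0r; apply: LS0.
      by apply: LSt => //; apply: supp_upd.
    rewrite !mulrA (cyX (i := i) (h := g)); last exact: sg.
    rewrite -!mulrA (mulrA (y i)) -(cpS_y iS) -!mulrA.
    rewrite mulrA; apply: LSt => //; apply: GM => //; by apply: Gy; rewrite inE.
  by rewrite mulrDr; apply: LSD.
- by rewrite mulrDl; apply: LSD; [apply: ha | apply: hb].
- by rewrite -mulrA; apply: ha; apply: hb.
- by rewrite -scalerAl; apply: LS_Z; apply: ha.
Qed.

Lemma RS_Z S (c : K) z : RSpan S z -> RSpan S (c *: z).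
Proof.
elim=> {z} [|d h sh|a b _ ha _ hb]; first by rewrite scaler0; apply: RS0.
  by rewrite !scalerAl; apply: RSt.
by rewrite scalerDr; apply: RSD.
Qed.

Lemma RS_gen S a z : Gen setT a -> RSpan S z -> RSpan S (z * a).
Proof.
move=> ga; elim: ga z => {a} [|i _|i _|a b _ ha _ hb|a b _ ha _ hb|k a _ ha] z hz.
- by rewrite mulr1.
- elim: hz => {z} [|d h sh|a b _ ha _ hb]; first by rewrite mul0r; apply: RS0.
    case: (boolP (i \in S)) => iS.
      rewrite -mulrA -(mulrA d) pYx //; case: (h i) => [|m]; first by rewrite mulr0; apply: RS0.
      by rewrite mulrA; apply: RSt => //; apply: supp_upd.
    rewrite -!mulrA -(cxY (i := i) (h := h)); last exact: sh.
    rewrite !mulrA -(mulrA d) (cpS_x iS) mulrA; apply: RSt => //.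
  by rewrite mulrDl; apply: RSD.
- elim: hz => {z} [|d h sh|a b _ ha _ hb]; first by rewrite mul0r; apply: RS0.
    case: (boolP (i \in S)) => iS.
      by rewrite -(mulrA _ (Y h)) Yy; apply: RSt => //; apply: supp_upd.
    rewrite -!mulrA -(cyY i h) !mulrA -(mulrA d) (cpS_y iS) mulrA; apply: RSt => //.
  by rewrite mulrDl; apply: RSD.
- by rewrite mulrDr; apply: RSD; [apply: ha | apply: hb].
- by rewrite mulrA; apply: hb; apply: ha.
- by rewrite -scalerAr; apply: RS_Z; apply: ha.
Qed.

Lemma bound_of (g : 'I_n -> nat) : forall i, (g i < \big[maxn/0%N]_(j < n) (g j).+1)%N.
Proof. by move=> i; exact: (leq_bigmax (F := fun j : 'I_n => (g j).+1) i). Qed.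

Lemma LS_bound S z : LSpan S z ->
  exists B, forall B', (B <= B')%N -> PB S B' * z = z.
Proof.
elim=> {z} [|g c sg gc|a b _ [B1 h1] _ [B2 h2]].
- by exists 0%N => B' _; rewrite mulr0.
- exists (\big[maxn/0%N]_(j < n) (g j).+1) => B' le; rewrite mulrA PB_l // => i.
  exact: leq_trans (bound_of g i) le.
- exists (maxn B1 B2) => B' le; rewrite mulrDr h1 ?h2 //.
    exact: leq_trans (leq_maxr _ _) le.
  exact: leq_trans (leq_maxl _ _) le.
Qed.

Lemma RS_bound S z : RSpan S z ->
  exists B, forall B', (B <= B')%N -> z * PB S B' = z.
Proof.
elim=> {z} [|d h sh|a b _ [B1 h1] _ [B2 h2]].
- by exists 0%N => B' _; rewrite mul0r.
- exists (\big[maxn/0%N]_(j < n) (h j).+1) => B' le; rewrite -(mulrA d) -(mulrA d (pS S * Y h)) PB_r // => i.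
  exact: leq_trans (bound_of h i) le.
- exists (maxn B1 B2) => B' le; rewrite mulrDl h1 ?h2 //.
    exact: leq_trans (leq_maxr _ _) le.
  exact: leq_trans (leq_maxl _ _) le.
Qed.

Lemma telescope (i : 'I_n) B :
  \sum_(k < B) x i ^+ k * p i * y i ^+ k = 1 - x i ^+ B * y i ^+ B.
Proof.
elim: B => [|B IH]; first by rewrite big_ord0 !expr0 mulr1 subrr.
rewrite big_ord_recr /= IH /p mulrBr mulr1 mulrBl.
rewrite (mulrA _ (x i)) -exprSr -(mulrA _ (y i)) -exprS.
by rewrite addrA subrK.
Qed.

Lemma DS_step (T : {set 'I_n}) (a : 'I_n) e k : supp e T -> a \notin T ->
  x a ^+ k * p a * y a ^+ k * (X e * pS T * Y e)
  = X (upd e a k) * pS (a |: T) * Y (upd e a k).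
Proof.
move=> se aT; have ea : e a = 0%N by apply: se.
have cyk : comm (y a ^+ k) (X e).
  by apply/commr_sym/commrX/commr_sym; apply: cyX.
have cyp : comm (y a ^+ k) (pS T) by apply/commr_sym/commrX; apply: cpS_y.
rewrite !mulrA -(mulrA _ (y a ^+ k)) cyk (mulrA _ (X e)) -(mulrA _ (y a ^+ k)) cyp.
rewrite -(mulrA _ (p a)) (cpX (i := a) (h := e)) //.
rewrite (X_ext a (upd e a k)) (Y_ext a (upd e a k)) pS_add // /upd eqxx.
have eX : X (fun j => if j == a then 0%N else if j == a then k else e j) = X e.
  by apply: X_eq => j; case: eqP => // ->.
have eY : Y (fun j => if j == a then 0%N else if j == a then k else e j) = Y e.
  by apply: Y_eq => j; case: eqP => // ->.
rewrite eX eY !mulrA -(mulrA _ (y a ^+ k)) (commr_sym (commrX k (commr_sym (cyY a e)))).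
by rewrite !mulrA.
Qed.

Lemma DS_sum S (I : Type) (F : I -> A) (r : seq I) :
  (forall k : I, DSpan S (F k)) -> DSpan S (\sum_(k <- r) F k).
Proof. move=> h; apply: big_ind => //; [exact: DS0 | exact: DSD]. Qed.

Lemma PB_DS_gen (S : {set 'I_n}) B (s : seq 'I_n) : uniq s ->
  DSpan [set i | (i \in S) && (i \in s)]
        (\prod_(i <- s) (if i \in S then 1 - x i ^+ B * y i ^+ B else 1)).
Proof.
elim: s => [|a s IH] /=.
  move=> _; rewrite big_nil.
  have -> : [set i | (i \in S) && (i \in [::])] = set0.
    by apply/setP => i; rewrite !inE andbF.
  have <- : X (fun _ => 0%N) * pS set0 * Y (fun _ => 0%N) = 1.
    by rewrite X0 Y0 pS0 !mul1r.
  by apply: DSt.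
case/andP => as_ us; rewrite big_cons; move: (IH us) => {IH} IH.
case: (boolP (a \in S)) => aS; last first.
  have -> : [set i | (i \in S) && (i \in a :: s)] = [set i | (i \in S) && (i \in s)].
    apply/setP => i; rewrite !inE; case: (eqVneq i a) => [->|] //=.
    by rewrite (negbTE aS).
  by rewrite mul1r.
set T := [set i | (i \in S) && (i \in s)].
have aT : a \notin T by rewrite inE (negbTE as_) andbF.
have -> : [set i | (i \in S) && (i \in a :: s)] = a |: T.
  apply/setP => i; rewrite !inE; case: (eqVneq i a) => [->|] //=; by rewrite aS.
rewrite -telescope.
elim: IH => {us} [|e se|u v _ hu _ hv].
- by rewrite mulr0; apply: DS0.
- rewrite mulr_suml; apply: DS_sum => k.
  rewrite DS_step //; apply: DSt; apply: supp_upd; last exact: setU11.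
  move=> j; rewrite !inE negb_or => /andP[_ h]. apply: se. rewrite inE. exact: h.
- by rewrite mulrDr; apply: DSD.
Qed.

Lemma PB_DS (S : {set 'I_n}) B : DSpan S (PB S B).
Proof.
have := PB_DS_gen S B (index_enum_uniq 'I_n).
have -> : [set i | (i \in S) && (i \in index_enum 'I_n)] = S.
  by apply/setP => i; rewrite !inE mem_index_enum andbT.
by [].
Qed.


Hypothesis Hgen : forall a, Gen setT a.

Inductive Dd (S : {set 'I_n}) : A -> Prop :=
| Dd0 : Dd S 0
| Ddt u j v : j \notin S -> Dd S (u * (p j * pS S) * v)
| DdD a b : Dd S a -> Dd S b -> Dd S (a + b).

Lemma Dd_mull S w z : Dd S z -> Dd S (w * z).
Proof.
elim=> {z} [|u j v jS|a b _ ha _ hb]; first by rewrite mulr0; apply: Dd0.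
  by rewrite (mulrA w (u * (p j * pS S)) v) (mulrA w u); apply: Ddt.
by rewrite mulrDr; apply: DdD.
Qed.
Lemma Dd_mulr S w z : Dd S z -> Dd S (z * w).
Proof.
elim=> {z} [|u j v jS|a b _ ha _ hb]; first by rewrite mul0r; apply: Dd0.
  by rewrite -(mulrA (u * (p j * pS S)) v w); apply: Ddt.
by rewrite mulrDl; apply: DdD.
Qed.
Lemma Dd_Z S (c : K) z : Dd S z -> Dd S (c *: z).
Proof.
elim=> {z} [|u j v jS|a b _ ha _ hb]; first by rewrite scaler0; apply: Dd0.
  by rewrite !scalerAl; apply: Ddt.
by rewrite scalerDr; apply: DdD.
Qed.
Lemma Dd_N S z : Dd S z -> Dd S (- z).
Proof. by move=> h; rewrite -scaleN1r; apply: Dd_Z. Qed.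
Lemma Dd_B S a b : Dd S a -> Dd S b -> Dd S (a - b).
Proof. by move=> ha hb; apply: DdD => //; apply: Dd_N. Qed.

Lemma comm_D S g c : Gen (~: S) c ->
  (forall j, j \notin S -> Dd S (pS S * (g * x j - x j * g)) /\
                           Dd S (pS S * (g * y j - y j * g))) ->
  Dd S (pS S * (g * c - c * g)).
Proof.
move=> gc hg; elim: gc => {c} [|j|j|a b _ ha _ hb|a b ga ha _ hb|k a _ ha].
- by rewrite mulr1 mul1r subrr mulr0; apply: Dd0.
- by rewrite inE => /hg[].
- by rewrite inE => /hg[].
- have -> : g * (a + b) - (a + b) * g = (g * a - a * g) + (g * b - b * g).
    by rewrite mulrDr mulrDl opprD addrACA.
  by rewrite mulrDr; apply: DdD.
- have -> : g * (a * b) - a * b * g = (g * a - a * g) * b + a * (g * b - b * g).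
    by rewrite mulrBl mulrBr !mulrA addrA subrK.
  rewrite mulrDr; apply: DdD; first by rewrite mulrA; apply: Dd_mulr.
  by rewrite mulrA (Gen_cpS ga) -mulrA; apply: Dd_mull.
- have -> : g * (k *: a) - k *: a * g = k *: (g * a - a * g).
    by rewrite -scalerAr -scalerAl scalerBr.
  by rewrite -scalerAr; apply: Dd_Z.
Qed.

Lemma Dd_p S j : j \notin S -> Dd S (pS S * p j).
Proof.
move=> jS; rewrite (cpS_p S j).
have <- : 1 * (p j * pS S) * 1 = p j * pS S by rewrite mul1r mulr1.
by apply: Ddt.
Qed.

Lemma comm_gen_x S j c : j \notin S -> Gen (~: S) c ->
  Dd S (pS S * (x j * c - c * x j)) /\ Dd S (pS S * (y j * c - c * y j)).
Proof.
move=> jS gc; split; apply: comm_D => // k kS; split.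
- by rewrite (cxx j k) subrr mulr0; apply: Dd0.
- case: (eqVneq j k) => [<-|jk]; last by rewrite (cxy jk) subrr mulr0; apply: Dd0.
  have -> : x j * y j - y j * x j = - p j by rewrite yx /p opprB.
  by rewrite mulrN; apply: Dd_N; exact: Dd_p.
- case: (eqVneq j k) => [<-|jk]; last by rewrite (cyx jk) subrr mulr0; apply: Dd0.
  by rewrite yx; apply: Dd_p.
- by rewrite (cyy j k) subrr mulr0; apply: Dd0.
Qed.

Lemma comm_gen_D S c c' : Gen (~: S) c -> Gen (~: S) c' ->
  Dd S (pS S * (c * c' - c' * c)).
Proof.
move=> gc gc'; apply: comm_D => // j jS; case: (comm_gen_x jS gc) => h1 h2.
split.
  by rewrite -opprB mulrN; apply: Dd_N.
by rewrite -opprB mulrN; apply: Dd_N.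
Qed.

Lemma LS_pS S a : LSpan S (a * pS S).
Proof.
apply: LS_gen; first exact: Hgen.
have <- : X (fun _ => 0%N) * pS S * 1 = pS S by rewrite X0 mul1r mulr1.
by apply: LSt => //; exact: G1.
Qed.
Lemma RS_pS S a : RSpan S (pS S * a).
Proof.
apply: RS_gen; first exact: Hgen.
have <- : 1 * pS S * Y (fun _ => 0%N) = pS S by rewrite Y0 mul1r mulr1.
by apply: RSt.
Qed.

Lemma corner_gen S a : exists c, Gen (~: S) c /\ pS S * a * pS S = pS S * c.
Proof.
rewrite -mulrA; elim: (LS_pS S a) => [|g c sg gc|u v _ [c1 [g1 e1]] _ [c2 [g2 e2]]].
- by exists 0; split; [exact: Gen0 | rewrite !mulr0].
- case: (boolP [forall i, g i == 0%N]) => [/forallP g0|].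
    exists c; split => //.
    rewrite (X_eq (h := fun _ => 0%N)); last by move=> i; apply/eqP.
    by rewrite X0 mul1r mulrA pSpS.
  rewrite negb_forall => /existsP[i gi].
  have iS : i \in S by apply: contraR gi => /sg ->.
  exists 0; split; first exact: Gen0.
  rewrite (X_ext i g); case E: (g i) gi => [|m] // _.
  by rewrite exprS !mulrA pSx // !mul0r mulr0.
- by exists (c1 + c2); split; [apply: GD | rewrite !mulrDr e1 e2].
Qed.

Section Ideal.
Variable M : A -> Prop.
Hypothesis M0 : M 0.
Hypothesis MD : forall a b, M a -> M b -> M (a + b).
Hypothesis Ml : forall r a, M a -> M (r * a).
Hypothesis Mr : forall r a, M a -> M (a * r).

Lemma MN a : M a -> M (- a).
Proof. by move=> h; rewrite -mulN1r; apply: Ml. Qed.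

Definition MDd S z := exists m d, M m /\ Dd S d /\ z = m + d.

Lemma MDd0 S : MDd S 0.
Proof. by exists 0, 0; split => //; split; [apply: Dd0 | rewrite addr0]. Qed.
Lemma MDdD S a b : MDd S a -> MDd S b -> MDd S (a + b).
Proof.
move=> [m1 [d1 [h1 [k1 ->]]]] [m2 [d2 [h2 [k2 ->]]]].
exists (m1 + m2), (d1 + d2); split; first exact: MD.
by split; [apply: DdD | rewrite addrACA].
Qed.
Lemma MDdN S a : MDd S a -> MDd S (- a).
Proof.
move=> [m1 [d1 [h1 [k1 ->]]]]; exists (- m1), (- d1); split; first exact: MN.
by split; [apply: Dd_N | rewrite opprD].
Qed.
Lemma MDdB S a b : MDd S a -> MDd S b -> MDd S (a - b).
Proof. by move=> ha hb; apply: MDdD => //; apply: MDdN. Qed.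
Lemma MDdl S w a : MDd S a -> MDd S (w * a).
Proof.
move=> [m1 [d1 [h1 [k1 ->]]]]; exists (w * m1), (w * d1); split; first exact: Ml.
by split; [apply: Dd_mull | rewrite mulrDr].
Qed.
Lemma MDdr S w a : MDd S a -> MDd S (a * w).
Proof.
move=> [m1 [d1 [h1 [k1 ->]]]]; exists (m1 * w), (d1 * w); split; first exact: Mr.
by split; [apply: Dd_mulr | rewrite mulrDl].
Qed.
Lemma MDdM S a : M a -> MDd S a.
Proof. by move=> h; exists a, 0; split => //; split; [apply: Dd0 | rewrite addr0]. Qed.
Lemma MDdDd S a : Dd S a -> MDd S a.
Proof. by move=> h; exists 0, a; split => //; split => //; rewrite add0r. Qed.

Definition corner S g h a := pS S * Y g * a * X h * pS S.

Lemma cornerD S g h a b : corner S g h (a + b) = corner S g h a + corner S g h b.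
Proof. by rewrite /corner mulrDr !mulrDl. Qed.
Lemma cornerB S g h a b : corner S g h (a - b) = corner S g h a - corner S g h b.
Proof. by rewrite /corner mulrBr !mulrBl. Qed.

Inductive CSS (S : {set 'I_n}) : A -> Prop :=
| CSS0 : CSS S 0
| CSSt u v : CSS S (u * pS S * v)
| CSSD a b : CSS S a -> CSS S b -> CSS S (a + b).

Lemma PB_both S z : CSS S z ->
  exists B, forall B', (B <= B')%N -> PB S B' * z * PB S B' = z.
Proof.
elim=> {z} [|u v|a b _ [B1 h1] _ [B2 h2]].
- by exists 0%N => B' _; rewrite mulr0 mul0r.
- have [B1 h1] := LS_bound (LS_pS S u).
  have [B2 h2] := RS_bound (RS_pS S v).
  exists (maxn B1 B2) => B' le.
  have -> : u * pS S * v = (u * pS S) * (pS S * v) by rewrite !mulrA -(mulrA u (pS S) (pS S)) pSpS.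
  rewrite (mulrA (PB S B') (u * pS S) (pS S * v)).
  rewrite -(mulrA (PB S B' * (u * pS S)) (pS S * v)).
  rewrite h1; last exact: leq_trans (leq_maxl _ _) le.
  by rewrite h2 // (leq_trans (leq_maxr _ _) le).
- exists (maxn B1 B2) => B' le; rewrite mulrDr mulrDl h1 ?h2 //.
    exact: leq_trans (leq_maxr _ _) le.
  exact: leq_trans (leq_maxl _ _) le.
Qed.

Lemma expand S z : CSS S z ->
  (forall g h, supp g S -> supp h S -> MDd S (corner S g h z)) -> MDd S z.
Proof.
move=> cz hc; have [B hB] := PB_both cz; rewrite -(hB B) //.
suff : forall w w', DSpan S w -> DSpan S w' -> MDd S (w * z * w').
  by apply; apply: PB_DS.
move=> w w' hw hw'; elim: hw => [|e se|u v _ hu _ hv].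
- by rewrite !mul0r; apply: MDd0.
- elim: hw' => [|e' se'|u v _ hu _ hv].
  + by rewrite mulr0; apply: MDd0.
  + have -> : X e * pS S * Y e * z * (X e' * pS S * Y e')
            = X e * corner S e e' z * Y e'.
      by rewrite /corner !mulrA.
    by apply: MDdr; apply: MDdl; apply: hc.
  + by rewrite mulrDr; apply: MDdD.
- by rewrite !mulrDl; apply: MDdD.
Qed.


Lemma mid_pS S a b :
  (pS S * a * pS S) * (pS S * b * pS S) = pS S * a * pS S * b * pS S.
Proof. by rewrite !mulrA -(mulrA (pS S * a) (pS S) (pS S)) pSpS. Qed.

Variables (I J : A -> Prop).
Hypothesis Il : forall r a, I a -> I (r * a).
Hypothesis Ir : forall r a, I a -> I (a * r).
Hypothesis Jl : forall r a, J a -> J (r * a).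
Hypothesis Jr : forall r a, J a -> J (a * r).
Hypothesis Mprod : forall b a, J b -> I a -> M (b * a).

Lemma E1 S g h u v : supp h S -> I u -> J v -> MDd S (corner S g h (u * v)).
Proof.
move=> sh Iu Jv.
have hz : LSpan S (v * X h * pS S).
  rewrite -mulrA; apply: LS_gen; first exact: Hgen.
  have <- : X h * pS S * 1 = X h * pS S by rewrite mulr1.
  by apply: LSt => //; apply: G1.
have [B hB] := LS_bound hz.
have -> : corner S g h (u * v) = pS S * Y g * u * (v * X h * pS S).
  by rewrite /corner !mulrA.
rewrite -(hB B) //.
elim: (PB_DS S B) => [|e se|w1 w2 _ h1 _ h2].
- by rewrite mul0r mulr0; apply: MDd0.
- have -> : pS S * Y g * u * (X e * pS S * Y e * (v * X h * pS S))
      = (pS S * (Y g * u * X e) * pS S) * (pS S * (Y e * v * X h) * pS S).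
    by rewrite mid_pS !mulrA.
  have [c [gc ec]] := corner_gen S (Y g * u * X e).
  have [c' [gc' ec']] := corner_gen S (Y e * v * X h).
  have Ia : I (pS S * (Y g * u * X e) * pS S).
    by apply: Ir; apply: Il; apply: Ir; apply: Il.
  have Jb : J (pS S * (Y e * v * X h) * pS S).
    by apply: Jr; apply: Jl; apply: Jr; apply: Jl.
  have cc : forall c1 c2, Gen (~: S) c1 ->
      (pS S * c1) * (pS S * c2) = pS S * (c1 * c2).
    by move=> c1 c2 g1; rewrite mulrA -(mulrA (pS S)) -(Gen_cpS g1) mulrA pSpS mulrA.
  rewrite ec ec' cc //.
  exists ((pS S * c') * (pS S * c)), (pS S * (c * c' - c' * c)); split.
    by apply: Mprod; [rewrite -ec' | rewrite -ec].
  split; first exact: comm_gen_D.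
  by rewrite cc // -mulrDr addrC subrK.
- by rewrite mulrDl mulrDr; apply: MDdD.
Qed.

Lemma corner_other S g h T u v j : j \in T -> j \notin S ->
  Dd S (corner S g h (u * pS T * v)).
Proof.
move=> jT jS.
have -> : corner S g h (u * pS T * v) = pS S * (Y g * u) * (pS T * (v * X h * pS S)).
  by rewrite /corner !mulrA.
elim: (RS_pS S (Y g * u)) => [|d h' sh'|w1 w2 _ h1 _ h2].
- by rewrite mul0r; apply: Dd0.
- set W := v * X h * pS S.
  have -> : d * pS S * Y h' * (pS T * W) = d * (p j * pS S) * (Y h' * (pS (T :\ j) * W)).
    rewrite (pS_ext jT) !mulrA -(mulrA (d * pS S) (Y h') (p j)).
    rewrite -(cpY (i := j) (h := h')); last exact: sh'.
    rewrite mulrA -(mulrA d (pS S) (p j)) (cpS_p S j) !mulrA.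
    by [].
  by apply: Ddt.
- by rewrite mulrDl; apply: DdD.
Qed.

Inductive CSum (F : {set {set 'I_n}}) : A -> Prop :=
| CSum0 : CSum F 0
| CSumt T u v : T \in F -> CSum F (u * pS T * v)
| CSumD a b : CSum F a -> CSum F b -> CSum F (a + b).

Definition Cond a := forall S g h, supp g S -> supp h S -> MDd S (corner S g h a).
Definition upclosed (F : {set {set 'I_n}}) :=
  forall T T', T \in F -> T \subset T' -> T' \in F.

Lemma CSum_set0 a : CSum set0 a -> a = 0.
Proof. by elim=> // [T u v|a1 b1 _ -> _ ->]; rewrite ?inE ?addr0. Qed.

Lemma CSum_split F S a : CSum F a ->
  exists a1 a2, CSS S a1 /\ CSum (F :\ S) a2 /\ a = a1 + a2.
Proof.
elim=> [|T u v TF|b c _ [b1 [b2 [h1 [h2 ->]]]] _ [c1 [c2 [k1 [k2 ->]]]]].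
- by exists 0, 0; split; [apply: CSS0 | split; [apply: CSum0 | rewrite addr0]].
- case: (eqVneq T S) => [->|TS].
    by exists (u * pS S * v), 0; split; [apply: CSSt | split; [apply: CSum0 | rewrite addr0]].
  exists 0, (u * pS T * v); split; first exact: CSS0.
  by split; [apply: CSumt; rewrite !inE TS | rewrite add0r].
- exists (b1 + c1), (b2 + c2); split; first exact: CSSD.
  by split; [apply: CSumD | rewrite addrACA].
Qed.

Lemma Dd_CSum F S d : Dd S d -> (forall j, j \notin S -> j |: S \in F :\ S) ->
  CSum (F :\ S) d.
Proof.
move=> hd hF; elim: hd => [|u j v jS|a1 b1 _ h1 _ h2].
- exact: CSum0.
- by rewrite -pS_add //; apply: CSumt; apply: hF.
- exact: CSumD.
Qed.

Lemma corner_CSum_other F S g h a :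
  (forall T, T \in F :\ S -> exists j, j \in T /\ j \notin S) ->
  CSum (F :\ S) a -> Dd S (corner S g h a).
Proof.
move=> hF; elim=> [|T u v TF|a1 b1 _ h1 _ h2].
- by rewrite /corner mulr0 !mul0r; apply: Dd0.
- by have [j [jT jS]] := hF T TF; apply: corner_other jT jS.
- by rewrite cornerD; apply: DdD.
Qed.

Lemma CondM m : M m -> Cond m.
Proof. by move=> hm S g h _ _; apply: MDdM; apply: Mr; apply: Mr; by apply: Ml. Qed.
Lemma CondB a b : Cond a -> Cond b -> Cond (a - b).
Proof. by move=> ha hb S g h sg sh; rewrite cornerB; apply: MDdB; [apply: ha | apply: hb]. Qed.

Lemma peel k : forall F : {set {set 'I_n}}, (#|F| <= k)%N -> upclosed F ->
  forall a, CSum F a -> Cond a -> M a.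
Proof.
elim: k => [|k IH] F cF uF a ha ca.
  have F0 : F = set0 by apply/eqP; rewrite -cards_eq0 -leqn0.
  by rewrite F0 in ha; rewrite (CSum_set0 ha).
case: (set_0Vmem F) => [F0|[S0 S0F]].
  by rewrite F0 in ha; rewrite (CSum_set0 ha).
have [S SF Smin] := @arg_minnP _ S0 (fun T => T \in F) (fun T : {set 'I_n} => #|T|) S0F.
have H1 : forall T, T \in F :\ S -> exists j, j \in T /\ j \notin S.
  move=> T; rewrite !inE => /andP[TS TF].
  case: (boolP (T \subset S)) => [sub|/subsetPn[j jT jS]]; last by exists j.
  have : T \proper S by rewrite properEneq TS sub.
  by move/proper_card; rewrite ltnNge Smin.
have H2 : forall j, j \notin S -> j |: S \in F :\ S.
  move=> j jS; rewrite !inE; apply/andP; split.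
    by apply: contraNneq jS => <-; rewrite setU11.
  by apply: uF SF _; apply: subsetUr.
have H3 : upclosed (F :\ S).
  move=> T T'; rewrite !inE => /andP[TS TF] sub; apply/andP; split; last exact: uF TF sub.
  apply/eqP => eTS; have [j [jT jS]] : exists j, j \in T /\ j \notin S.
    by apply: H1; rewrite !inE TS TF.
  by move/subsetP: sub => /(_ j jT); rewrite eTS (negbTE jS).
have H4 : (#|F :\ S| <= k)%N.
  by move: cF; rewrite (cardsD1 S F) SF.
have [a1 [a2 [c1 [c2 ea]]]] := CSum_split S ha.
have ma1 : MDd S a1.
  apply: expand => // g h sg sh.
  have -> : a1 = a - a2 by rewrite ea addrK.
  rewrite cornerB; apply: MDdB; first exact: ca.
  by apply: MDdDd; apply: corner_CSum_other c2.
have [m [d [hm [hd ea1]]]] := ma1.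
have hr : CSum (F :\ S) (d + a2) by apply: CSumD => //; apply: Dd_CSum.
have er : d + a2 = a - m by rewrite ea ea1 -(addrA m d a2) (addrC m (d + a2)) addrK.
have : M (d + a2).
  apply: (IH (F :\ S)) => //; rewrite er; apply: CondB => //; exact: CondM.
by move=> h; rewrite ea ea1 -addrA; apply: MD.
Qed.

Lemma main_incl a :
  (exists s : seq (A * A), (forall q, q \in s -> I q.1 /\ J q.2) /\
     a = \sum_(q <- s) q.1 * q.2) -> M a.
Proof.
move=> [s [hs ->]].
apply: (peel (k := #|[set: {set 'I_n}]|) (F := setT)) => //.
- by move=> T T' _ _; rewrite inE.
- have -> : \sum_(q <- s) q.1 * q.2 = 1 * pS set0 * \sum_(q <- s) q.1 * q.2.
    by rewrite pS0 !mul1r.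
  by apply: CSumt; rewrite inE.
- move=> S g h sg sh; elim: s hs => [|q s IHs] hs.
    by rewrite big_nil /corner mulr0 !mul0r; apply: MDd0.
  rewrite big_cons cornerD; apply: MDdD.
    by have [] := hs q (mem_head _ _) => ? ?; apply: E1.
  by apply: IHs => q' hq'; apply: hs; rewrite inE hq' orbT.
Qed.

End Ideal.

End Basics.

Section GenSub.
Variables (K : fieldType) (n : nat) (A : algType K) (x y : 'I_n -> A).

Definition Pg (a : A) : bool :=
  if excluded_middle_informative (Gen x y setT a) then true else false.
Lemma PgP a : reflect (Gen x y setT a) (Pg a).
Proof. rewrite /Pg; case: excluded_middle_informative => h; by constructor. Qed.

Fact Pg_closed : GRing.subsemialg_closed Pg.
Proof.
have PgE : forall a, (a \in Pg) = Pg a by [].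
split.
- by rewrite PgE; apply/PgP; apply: G1.
- split.
    by rewrite PgE; apply/PgP; apply: Gen0.
  by move=> a b; rewrite !PgE => /PgP ha /PgP hb; apply/PgP; apply: GD.
- by move=> c a; rewrite !PgE => /PgP ha; apply/PgP; apply: GZ.
- by move=> a b; rewrite !PgE => /PgP ha /PgP hb; apply/PgP; apply: GM.
Qed.
HB.instance Definition _ := GRing.isSubalgClosed.Build K A Pg Pg_closed.
Record gsub := GSub { gval : A; _ : Pg gval }.
HB.instance Definition _ := [isSub for gval].
HB.instance Definition _ := [Choice of gsub by <:].
HB.instance Definition _ := [SubChoice_isSubAlgebra of gsub by <:].

Section Comp.
Variable f : {lrmorphism A -> gsub}.
Definition gf := fun a => gval (f a).
HB.instance Definition _ := GRing.RMorphism.copy gf (val \o f).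
HB.instance Definition _ := GRing.Linear.copy gf (val \o f).
End Comp.

Lemma gen_all : is_Sn x y -> forall a, Gen x y setT a.
Proof.
move=> [rel univ] a.
have hx i : Pg (x i) by apply/PgP; apply: Gx; rewrite inE.
have hy i : Pg (y i) by apply/PgP; apply: Gy; rewrite inE.
pose u i : gsub := GSub (hx i).
pose v i : gsub := GSub (hy i).
have rel' : Sn_rels u v.
  case: rel => r1 r2; split.
    by move=> i; apply: val_inj; rewrite rmorphM rmorph1 /= r1.
  move=> i j ij; have [e1 e2 e3] := r2 i j ij.
  by split; apply: val_inj; rewrite !rmorphM /=.
have [[f hf] _] := univ gsub u v rel'.
have [_ uniq] := univ A x y rel.
have e := uniq (gf f) idfun.
have : gf f a = a.
  apply: e => // i; case: (hf i) => h1 h2; split; [exact: (f_equal gval h1) | exact: (f_equal gval h2)].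
by move=> <-; apply/PgP; apply: valP.
Qed.
End GenSub.

Section IdealMul.
Variables (R : nzRingType) (I J : R -> Prop).
Lemma im0 : ideal_mul I J 0.
Proof. by exists [::]; split => //; rewrite big_nil. Qed.
Lemma imD a b : ideal_mul I J a -> ideal_mul I J b -> ideal_mul I J (a + b).
Proof.
move=> [s [hs ->]] [t [ht ->]]; exists (s ++ t); split; last by rewrite big_cat.
by move=> q; rewrite mem_cat => /orP[/hs|/ht].
Qed.
Hypothesis Il : forall r a, I a -> I (r * a).
Hypothesis Jr : forall r a, J a -> J (a * r).
Lemma iml r a : ideal_mul I J a -> ideal_mul I J (r * a).
Proof.
move=> [s [hs ->]]; exists [seq (r * q.1, q.2) | q <- s]; split.
  by move=> q /mapP[q' /hs [h1 h2] ->]; split => //; apply: Il.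
by rewrite big_map mulr_sumr; apply: eq_bigr => q _; rewrite mulrA.
Qed.
Lemma imr r a : ideal_mul I J a -> ideal_mul I J (a * r).
Proof.
move=> [s [hs ->]]; exists [seq (q.1, q.2 * r) | q <- s]; split.
  by move=> q /mapP[q' /hs [h1 h2] ->]; split => //; apply: Jr.
by rewrite big_map mulr_suml; apply: eq_bigr => q _; rewrite mulrA.
Qed.
End IdealMul.

Lemma incl (K : fieldType) (n : nat) (A : algType K) (x y : 'I_n -> A) :
  is_Sn x y ->
  forall I J : A -> Prop, two_sided_ideal I -> two_sided_ideal J ->
    forall c : A, ideal_mul I J c -> ideal_mul J I c.
Proof.
move=> hS I J [_ [_ hI]] [_ [_ hJ]] c hc.
have [[yx cm] _] := hS.
apply: (@main_incl K n A x y yx cm (gen_all hS) (ideal_mul J I) _ _ _ _ I J) => //.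
- exact: im0.
- by move=> a b; apply: imD.
- by move=> r a; apply: iml => r' a' /(hJ r') [].
- by move=> r a; apply: imr => r' a' /(hI r') [].
- by move=> r a /(hI r) [].
- by move=> r a /(hI r) [].
- by move=> r a /(hJ r) [].
- by move=> r a /(hJ r) [].
- by move=> b a hb ha; exists [:: (b, a)]; split;
    [move=> q; rewrite inE => /eqP -> | rewrite big_seq1].
Qed.

Unset Implicit Arguments.
Set Strict Implicit.

Theorem theorem2p8 (K : fieldType) (n : nat) (A : algType K)
    (x y : 'I_n -> A) :
  (1 <= n)%N -> is_Sn x y ->
  forall I J : A -> Prop, two_sided_ideal I -> two_sided_ideal J ->
    forall c : A, ideal_mul I J c <-> ideal_mul J I c.
Proof.
move=> _ hS I J hI hJ c; split; [exact: (incl hS hI hJ) | exact: (incl hS hJ hI)].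
Qed.
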